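(* Let $X_1$ and $X_2$ be finite sets of quantifier-free first-order clauses, and let $\pi(X_1)$ be the set of prime implicates of $X_1$. If $C_1$ and $C_2$ are implicates of $\pi(X_1)\cup X_2$ and their consensus $CON(C_1,C_2)$ is defined, then $CON(C_1,C_2)$ is an implicate of $X_1\cup X_2$.
   Context: The setting is first-order logic without equality. A literal is an atom or a negated atom. A clause is a finite disjunction of literals, also viewed as a finite set of literals, and all its variables are implicitly universally quantified. A formula (knowledge base) is a finite conjunction, equivalently a finite set, of clauses. A clause is fundamental if it does not contain a literal together with its negation; all clauses considered are assumed fundamental. $\models$ denotes first-order logical consequence. Clause $C_1$ subsumes clause $C_2$ iff there is a substitution $\sigma$ with $C_1\sigma\subseteq C_2$. A clause $C$ is an implicate of a set of clauses $X$ if $X\sigma\models C$ for some substitution $\sigma$. A prime implicate of $X$ is an implicate of $X$ that is not subsumed by any other implicate of $X$. $\pi(X)$ denotes the set of prime implicates of $X$. Two literals $r,s$ are complementary if $\{r,\neg s\}$ is unifiable; its most general unifier $\sigma$ is the complementary substitution. For clauses $C_1\ni r$ and $C_2\ni s$ with $r,s$ complementary via mgu $\sigma$ (so $r\sigma=t$ and $s\sigma=\neg t$), the resolvent is $[(C_1-\{r\})\cup(C_2-\{s\})]\sigma=(C_1\sigma-\{t\})\cup(C_2\sigma-\{\neg t\})$. If this resolvent is fundamental it is called the consensus $CON(C_1,C_2)$, and it is said to be associated with $\sigma$. Each original clause of a set is associated with the empty substitution. If $C_1,C_2$ are associated with $\sigma_1,\sigma_2$, their consensus with respect to $\sigma$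 is defined only when $\sigma_1\sigma=\sigma_2\sigma$. In that case it is the propositional consensus of $C_1\sigma$ and $C_2\sigma$, and it is associated with $\sigma_1\sigma=\sigma_2\sigma$. *)

(* Defs.v *)
From Stdlib Require Import List.
Import ListNotations.

Inductive term : Type :=
| Var : nat -> term
| Fn : nat -> list term -> term.

(* A literal: polarity (true = positive atom), predicate symbol, arguments. *)
Record literal : Type := Lit { lpos : bool; lpred : nat; largs : list term }.

(* Clauses are finite sets of literals, represented by lists (read as sets
   via membership). *)
Definition clause := list literal.
Definition clause_set := clause -> Prop.

Definition negate (l : literal) : literal := Lit (negb (lpos l)) (lpred l) (largs l).

Definition subst := nat -> term.

Fixpoint tsubst (s : subst) (t : term) : term :=
  match t with
  | Var x => s x
  | Fn f ts => Fn f (map (tsubst s) ts)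
  end.

Definition lsubst (s : subst) (l : literal) : literal :=
  Lit (lpos l) (lpred l) (map (tsubst s) (largs l)).

Definition csubst (s : subst) (C : clause) : clause := map (lsubst s) C.

Definition set_subst (s : subst) (X : clause_set) : clause_set :=
  fun D => exists C, X C /\ D = csubst s C.

Definition set_of (X : list clause) : clause_set := fun C => In C X.
Definition set_union (X Y : clause_set) : clause_set := fun C => X C \/ Y C.

Record structure : Type := {
  dom : Type;
  dom_elt : dom;
  fn_int : nat -> list dom -> dom;
  pred_int : nat -> list dom -> Prop }.

Fixpoint teval (M : structure) (v : nat -> dom M) (t : term) : dom M :=
  match t with
  | Var x => v x
  | Fn f ts => fn_int M f (map (teval M v) ts)
  end.

Definition sat_lit (M : structure) (v : nat -> dom M) (l : literal) : Prop :=
  if lpos l then pred_int M (lpred l) (map (teval M v) (largs l))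
  else ~ pred_int M (lpred l) (map (teval M v) (largs l)).

Definition sat_clause (M : structure) (C : clause) : Prop :=
  forall v : nat -> dom M, exists l, In l C /\ sat_lit M v l.

Definition models (M : structure) (X : clause_set) : Prop :=
  forall C, X C -> sat_clause M C.

Definition entails (X : clause_set) (C : clause) : Prop :=
  forall M : structure, models M X -> sat_clause M C.

Definition fundamental (C : clause) : Prop :=
  ~ (exists l, In l C /\ In (negate l) C).

Definition subsumes (C1 C2 : clause) : Prop :=
  exists s : subst, forall l, In l (csubst s C1) -> In l C2.

Definition implicate (X : clause_set) (C : clause) : Prop :=
  fundamental C /\ exists s : subst, entails (set_subst s X) C.

(* Prime implicate: an implicate not subsumed by any other implicate,
   where "other" is read up to mutual subsumption (variants). *)
Definition prime_implicate (X : clause_set) (C : clause) : Prop :=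
  implicate X C /\
  forall C', implicate X C' -> subsumes C' C -> subsumes C C'.

Definition prime_implicates (X : clause_set) : clause_set := prime_implicate X.

Definition is_mgu (s : subst) (l1 l2 : literal) : Prop :=
  lsubst s l1 = lsubst s l2 /\
  forall th : subst, lsubst th l1 = lsubst th l2 ->
    exists eta : subst, forall x, th x = tsubst eta (s x).

(* consensus C1 C2 R : the consensus CON(C1,C2) is defined (for some choice of
   complementary literals r in C1, s in C2 with complementary substitution
   sigma) and equals R, as a set of literals. *)
Definition consensus (C1 C2 R : clause) : Prop :=
  exists (r s : literal) (sg : subst),
    In r C1 /\ In s C2 /\ is_mgu sg r (negate s) /\
    (forall l, In l R <->
       exists l0, ((In l0 C1 /\ l0 <> r) \/ (In l0 C2 /\ l0 <> s)) /\
                  l = lsubst sg l0) /\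
    fundamental R.

(* Main.v *)
Require Import Defs.
From Stdlib Require Import List Classical.

Lemma teval_tsubst M v sg : forall t,
  teval M v (tsubst sg t) = teval M (fun x => teval M v (sg x)) t.
Proof.
  fix IH 1. intros [x|f ts]; [reflexivity|]. simpl. f_equal. rewrite map_map.
  induction ts as [|t ts IHts]; simpl; [reflexivity|]. rewrite IH, IHts. reflexivity.
Qed.

Lemma sat_lsubst M v s l :
  sat_lit M v (lsubst s l) <-> sat_lit M (fun x => teval M v (s x)) l.
Proof.
  unfold sat_lit, lsubst; simpl. rewrite map_map.
  assert (E : map (fun x => teval M v (tsubst s x)) (largs l)
            = map (teval M (fun x => teval M v (s x))) (largs l)).
  { apply map_ext. intro. apply teval_tsubst. }
  rewrite E. tauto.
Qed.

Lemma sat_csubst M s C : sat_clause M C -> sat_clause M (csubst s C).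
Proof.
  intros H v. destruct (H (fun x => teval M v (s x))) as [l [Hl Hs]].
  exists (lsubst s l). split. apply in_map; auto. apply sat_lsubst; auto.
Qed.

Lemma sat_csubst_var M C : sat_clause M (csubst Var C) -> sat_clause M C.
Proof.
  intros H v. destruct (H v) as [l [Hl Hs]].
  unfold csubst in Hl. apply in_map_iff in Hl. destruct Hl as [l0 [<- Hl0]].
  exists l0. split; auto. apply sat_lsubst in Hs. exact Hs.
Qed.

Lemma models_Y M X1 X2 s :
  models M (set_subst Var (set_of (X1 ++ X2))) ->
  models M (set_subst s (set_union (prime_implicates (set_of X1)) (set_of X2))).
Proof.
  intros HM D [C [HC ->]]. apply sat_csubst.
  assert (Hall : forall C, In C (X1 ++ X2) -> sat_clause M C).
  { intros C0 H0. apply sat_csubst_var. apply HM. exists C0; split; auto. }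
  destruct HC as [HC|HC].
  - destruct HC as [[_ [sg Hent]] _]. apply Hent.
    intros D0 [C0 [H0 ->]]. apply sat_csubst. apply Hall. apply in_or_app; left; exact H0.
  - apply Hall. apply in_or_app; right; exact HC.
Qed.

Lemma neg_sat M v l : sat_lit M v (negate l) -> sat_lit M v l -> False.
Proof.
  unfold sat_lit, negate; simpl. destruct (lpos l); simpl; auto.
Qed.

Theorem theorem1 (X1 X2 : list clause) (C1 C2 R : clause) :
  implicate (set_union (prime_implicates (set_of X1)) (set_of X2)) C1 ->
  implicate (set_union (prime_implicates (set_of X1)) (set_of X2)) C2 ->
  consensus C1 C2 R ->
  implicate (set_of (X1 ++ X2)) R.
Proof.
  intros [_ [s1 H1]] [_ [s2 H2]] [r [s [sg [Hr [Hs [[Hmgu _] [HR Hf]]]]]]].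
  split; [exact Hf|]. exists Var. intros M HM v.
  assert (S1 := H1 M (models_Y _ _ _ _ HM)).
  assert (S2 := H2 M (models_Y _ _ _ _ HM)).
  set (v' := fun x => teval M v (sg x)).
  destruct (S1 v') as [l1 [Hl1 Hsat1]].
  destruct (classic (l1 = r)) as [E1|N1].
  - subst l1. destruct (S2 v') as [l2 [Hl2 Hsat2]].
    destruct (classic (l2 = s)) as [E2|N2].
    + subst l2. exfalso.
      apply (sat_lsubst M v sg) in Hsat1. apply (sat_lsubst M v sg) in Hsat2.
      rewrite Hmgu in Hsat1.
      apply (neg_sat M v (lsubst sg s)); [|exact Hsat2].
      unfold negate, lsubst in *; simpl in *. exact Hsat1.
    + exists (lsubst sg l2). split.
      * apply HR. exists l2. split; auto.
      * apply sat_lsubst. exact Hsat2.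
  - exists (lsubst sg l1). split.
    + apply HR. exists l1. split; auto.
    + apply sat_lsubst. exact Hsat1.
Qed.
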